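(* If $\mathcal{A}$ is a $(\kappa,\beta)$-single-parameter family of $k$-swap local search heuristics for an object assignment problem with $n$ objects, and $\mathrm{cost}(A,x)$ is the objective value of the solution output by $A$ on $x$, then the pseudo-dimension of $\mathcal{A}$ is $O(k\log(\kappa\beta n))$.
   Context: Object assignment problem: an instance is $n$ objects with attributes, and a feasible solution assigns each object a value in a finite set $R$ subject to feasibility constraints; an initial feasible solution is given. A $k$-swap local search heuristic: starting from a feasible solution, while the current solution is not locally optimal, compute a score $\sigma(\{\xi_i:i\in K\})$ for each set $K$ of $k$ objects ($\xi_i$ the current attribute of $i$), take the set $K$ with highest score (ties broken lexicographically), and use an assignment rule to reassign each $i\in K$ a value in $R$, updating attributes of objects as necessary; the assignment rule maintains feasibility and the procedure terminates. A single-parameter family of scoring rules $\sigma(\rho,\cdot)$, $\rho$ in an interval $I$, continuous in $\rho$, is $\kappa$-crossing if for every subset $K$ of at most $k$ objects and every pair of distinct attribute sets $\xi_K\neq\xi'_K$, there are at most $\kappa$ values of $\rho$ with $\sigma(\rho,\xi_K)=\sigma(\rho,\xi'_K)$. An assignment rule is $\beta$-bounded if for every subset $K$ of at most $k$ objects, over all possible trajectories, the attribute set of $K$ takes at most $\beta$ distinct values. A $(\kappa,\beta)$-single-parameter family couples such scoring rules with a fixed such assignment rule. Pseudo-dimension: a finite set $\{x_1,\dots,x_m\}$ is shattered by a class $\mathcal{H}$ of real functions if there exist reals $r_i$ such that for every $T\subseteq\{1,\dots,m\}$ some $h\in\mathcal{H}$ has $h(x_i)>r_i\iff i\in T$; the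 pseudo-dimension is the largest size of a shattered set. *)

(* Defs.v *)
From Stdlib Require Import Reals.
From mathcomp Require Import all_boot.

Set Implicit Arguments.
Unset Strict Implicit.
Unset Printing Implicit Defensive.

(* All k-element sub-lists of l, in lexicographic order when l is sorted. *)
Fixpoint ksubs (T : Type) (l : seq T) (k : nat) : seq (seq T) :=
  match l with
  | [::] => if k is 0 then [:: [::]] else [::]
  | x :: l' => if k is k'.+1 then map (cons x) (ksubs l' k') ++ ksubs l' k
               else [:: [::]]
  end.

Definition first_argmax (T : Type) (f : T -> R) (x0 : T) (s : seq T) : T :=
  foldl (fun b y => if Rlt_dec (f b) (f y) then y else b) x0 s.

Definition is_interval (I : R -> Prop) : Prop :=
  forall a b c : R, I a -> I b -> Rle a c /\ Rle c b -> I c.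

Section LocalSearch.
Variables (X : Type) (n : nat) (V : finType) (A : eqType).
(* attr x s i : current attribute xi_i of object i in instance x under solution s *)
Variable attr : X -> {ffun 'I_n -> V} -> 'I_n -> A.
(* score rule sigma(rho, .) applied to the (multi)set of attributes of K *)
Variable sigma : R -> seq A -> R.
(* assignment rule: reassigns the objects of K *)
Variable rule : X -> {set 'I_n} -> {ffun 'I_n -> V} -> {ffun 'I_n -> V}.
Variable init : X -> {ffun 'I_n -> V}.
Variable locopt : X -> {ffun 'I_n -> V} -> bool.
Variable k : nat.

Definition score (rho : R) (x : X) (s : {ffun 'I_n -> V}) (K : seq 'I_n) : R :=
  sigma rho (map (attr x s) K).

(* the set K of k objects with highest score, ties broken lexicographically *)
Definition chosen (rho : R) (x : X) (s : {ffun 'I_n -> V}) : seq 'I_n :=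
  match ksubs (enum 'I_n) k with
  | [::] => [::]
  | K0 :: Ks => first_argmax (score rho x s) K0 Ks
  end.

Definition step (rho : R) (x : X) (s : {ffun 'I_n -> V}) : {ffun 'I_n -> V} :=
  rule x [set i in chosen rho x s] s.

Definition traj (rho : R) (x : X) (t : nat) : {ffun 'I_n -> V} :=
  iter t (step rho x) (init x).

(* first time a locally optimal solution is reached; since the dynamics is
   deterministic on the finite set of solutions, if it terminates at all it
   does so within #|solutions| steps *)
Definition stop_time (rho : R) (x : X) : nat :=
  find (fun t => locopt x (traj rho x t)) (iota 0 (#|{: {ffun 'I_n -> V}}|).+1).

Definition output (rho : R) (x : X) : {ffun 'I_n -> V} :=
  traj rho x (stop_time rho x).

Definition on_traj (rho : R) (x : X) (t : nat) : Prop :=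
  forall t', (t' < t)%N -> ~~ locopt x (traj rho x t').

End LocalSearch.

Definition score_symmetric (A : eqType) (sigma : R -> seq A -> R) : Prop :=
  forall rho (c c' : seq A), perm_eq c c' -> sigma rho c = sigma rho c'.

Definition score_continuous (A : eqType) (I : R -> Prop)
    (sigma : R -> seq A -> R) : Prop :=
  forall (c : seq A) rho0, I rho0 ->
    limit1_in (fun rho => sigma rho c) I (sigma rho0 c) rho0.

Definition kappa_crossing (A : eqType) (I : R -> Prop) (sigma : R -> seq A -> R)
    (k kappa : nat) : Prop :=
  forall c c' : seq A, size c = size c' -> (size c <= k)%N -> ~~ perm_eq c c' ->
    exists L : seq R, (size L <= kappa)%N /\
      forall rho, I rho -> sigma rho c = sigma rho c' -> List.In rho L.

Definition beta_bounded (X : Type) (n : nat) (V : finType) (A : eqType)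
    (attr : X -> {ffun 'I_n -> V} -> 'I_n -> A) (sigma : R -> seq A -> R)
    (rule : X -> {set 'I_n} -> {ffun 'I_n -> V} -> {ffun 'I_n -> V})
    (init : X -> {ffun 'I_n -> V}) (locopt : X -> {ffun 'I_n -> V} -> bool)
    (k beta : nat) (I : R -> Prop) : Prop :=
  forall (x : X) (K : {set 'I_n}), (#|K| <= k)%N ->
    exists L : seq (seq A), (size L <= beta)%N /\
      forall rho t, I rho -> on_traj attr sigma rule init locopt k rho x t ->
        exists2 c, c \in L &
          perm_eq c [seq attr x (traj attr sigma rule init k rho x t) i | i <- enum K].

(* the (injectively indexed) set {xs i} is shattered by {h rho | I rho} *)
Definition shatters (X : Type) (I : R -> Prop) (h : R -> X -> R)
    (m : nat) (xs : 'I_m -> X) : Prop :=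
  injective xs /\
  exists r : 'I_m -> R, forall T : {set 'I_m},
    exists rho, I rho /\ forall i, Rlt (r i) (h rho (xs i)) <-> i \in T.

(* Main.v *)
Require Import Defs.
From Stdlib Require Import Reals Lra Lia ClassicalEpsilon.
From mathcomp Require Import all_boot zify.
Set Implicit Arguments. Unset Strict Implicit. Unset Printing Implicit Defensive.

Lemma card_setT m : #|{set 'I_m}| = (2 ^ m)%N.
Proof. by rewrite -cardsT -powersetT card_powerset cardsT card_ord. Qed.

Lemma expn_pow a b : expn a b = Nat.pow a b.
Proof. elim: b => [|b IH] //; by rewrite expnS IH. Qed.

Lemma ksubs_sub (T : eqType) (l : seq T) k K :
  K \in ksubs l k -> subseq K l /\ size K = k.
Proof.
elim: l k K => [|x l IH] [|k] K.
- by rewrite /= inE => /eqP ->.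
- by [].
- by rewrite /= inE => /eqP ->; split => //; exact: sub0seq.
- rewrite /= mem_cat => /orP[/mapP[K' /IH [h1 h2] ->]|/IH [h1 h2]].
  + by rewrite /= eqxx h1 h2.
  + split=> //; exact: (subseq_trans h1 (subseq_cons l x)).
Qed.

Lemma size_ksubs (T : Type) (l : seq T) k : (size (ksubs l k) <= (size l) ^ k)%N.
Proof.
elim: l k => [|x l IH] [|k] //=.
rewrite size_cat size_map.
apply: leq_trans (leq_add (IH k) (IH k.+1)) _.
rewrite expnS [X in (_ <= X)%N]expnS.
have h : (size l ^ k <= (size l).+1 ^ k)%N.
  case: k {IH} => [|k] //; rewrite leq_exp2r //.
rewrite -{1}(mul1n (size l ^ k)) -mulnDl add1n leq_mul2l /=; exact: h.
Qed.

Lemma first_argmax_ext (T : eqType) (P : T -> Prop) (f g : T -> R) x0 s :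
  (forall a b, P a -> P b -> (Rlt (f a) (f b) <-> Rlt (g a) (g b))) ->
  P x0 -> (forall y, y \in s -> P y) ->
  first_argmax f x0 s = first_argmax g x0 s.
Proof.
rewrite /first_argmax => H; elim: s x0 => [|y s IH] x0 //= Px0 Ps.
have Py : P y by apply: Ps; rewrite mem_head.
have E : (if Rlt_dec (f x0) (f y) then y else x0) =
         (if Rlt_dec (g x0) (g y) then y else x0).
  case: Rlt_dec => h1; case: Rlt_dec => h2 //; exfalso.
  + by apply: h2; apply/(H _ _ Px0 Py).
  + by apply: h1; apply/(H _ _ Px0 Py).
rewrite E; apply: IH => [|z hz]; first by case: Rlt_dec.
by apply: Ps; rewrite inE hz orbT.
Qed.

Lemma size_flatten_count (T : eqType) (U : Type) (G : T -> seq U) (p : pred T) s b :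
  (forall c, c \in s -> p c -> (size (G c) <= b)%N) ->
  (forall c, ~~ p c -> G c = [::]) ->
  (size (flatten (map G s)) <= count p s * b)%N.
Proof.
move=> H1 H2; elim: s H1 => [|c s IH] H1 //=.
rewrite size_cat mulnDl; case pc: (p c) => /=.
- rewrite mul1n leq_add //; first by apply: H1 => //; rewrite mem_head.
  by apply: IH => y hy; apply: H1; rewrite inE hy orbT.
- rewrite H2 ?pc //= add0n; by apply: IH => y hy; apply: H1; rewrite inE hy orbT.
Qed.

Lemma count_lt_pred (T : eqType) (p : pred T) s x :
  x \in s -> ~~ p x -> (count p s <= (size s).-1)%N.
Proof.
move=> xs npx; have := count_predC p s.
have : (0 < count (predC p) s)%N by rewrite -has_count; apply/hasP; exists x.
lia.
Qed.

Lemma count_lt_strict (T : Type) (p q : pred T) s x :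
  (forall y, p y -> q y) -> List.In x s -> q x -> ~~ p x ->
  (count p s < count q s)%N.
Proof.
move=> pq; elim: s => [|y s IH] //= [<-|hx] qx npx.
- rewrite (negbTE npx) qx /= add0n add1n ltnS.
  by apply: sub_count => z; apply: pq.
- have := IH hx qx npx.
  case py: (p y); first by rewrite (pq _ py) /= !add1n ltnS.
  case: (q y) => /= h; lia.
Qed.

Lemma In_flatten_map (T : eqType) (U : Type) (F : T -> seq U) s a z :
  a \in s -> List.In z (F a) -> List.In z (flatten [seq F x | x <- s]).
Proof.
elim: s => [|y s IH] //=; rewrite inE => /orP[/eqP<-|h] hz; apply: List.in_or_app.
- by left.
- by right; apply: IH.
Qed.

Local Open Scope R_scope.
Definition clamp (a b y : R) : R := Rmin b (Rmax a y).

Lemma clamp_lip a b x y : Rle a b -> Rle (Rabs (clamp a b y - clamp a b x)) (Rabs (y - x)).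
Proof.
move=> hab; rewrite /clamp /Rmin /Rmax.
repeat (destruct Rle_dec); split_Rabs; lra.
Qed.

Lemma clamp_in a b y : Rle a b -> Rle a (clamp a b y) /\ Rle (clamp a b y) b.
Proof. move=> hab; rewrite /clamp /Rmin /Rmax; repeat (destruct Rle_dec); lra. Qed.

Lemma clamp_id a b y : Rle a y -> Rle y b -> clamp a b y = y.
Proof. move=> h1 h2; rewrite /clamp /Rmin /Rmax; repeat (destruct Rle_dec); lra. Qed.

Lemma IVT_I (I : R -> Prop) (f : R -> R) a b :
  is_interval I -> (forall r, I r -> limit1_in f I (f r) r) ->
  I a -> I b -> Rle a b -> Rlt (f a) 0 -> Rlt 0 (f b) ->
  exists z, I z /\ Rle a z /\ Rle z b /\ f z = 0.
Proof.
move=> HI Hc Ia Ib hab fa fb.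
have Icl : forall y, I (clamp a b y).
  move=> y; have [h1 h2] := clamp_in y hab; exact: (HI a b _ Ia Ib (conj h1 h2)).
have hab' : Rlt a b.
  destruct (Rle_lt_or_eq_dec _ _ hab) as [h|h] => //; subst; lra.
have cont : continuity (fun y => f (clamp a b y)).
  move=> x eps heps.
  have [alp [halp H]] := Hc _ (Icl x) eps heps.
  exists alp; split => // y [_ hy].
  apply: H; split; first exact: Icl.
  move: hy; rewrite /dist /= /R_dist => hy.
  have := clamp_lip x y hab; lra.
have ea : f (clamp a b a) < 0 by rewrite clamp_id; lra.
have eb : 0 < f (clamp a b b) by rewrite clamp_id; lra.
have [z [[hz1 hz2] fz]] := IVT _ a b cont hab' ea eb.
exists z; split; first exact: (HI a b z Ia Ib (conj hz1 hz2)).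
by rewrite clamp_id in fz.
Qed.

Lemma sign_const (I : R -> Prop) (f : R -> R) a b :
  is_interval I -> (forall r, I r -> limit1_in f I (f r) r) ->
  I a -> I b -> Rle a b ->
  (forall z, I z -> Rle a z -> Rle z b -> f z <> 0) ->
  (Rlt (f a) 0 <-> Rlt (f b) 0).
Proof.
move=> HI Hc Ia Ib hab Hz.
have fa0 := Hz a Ia (Rle_refl a) hab.
have fb0 := Hz b Ib hab (Rle_refl b).
split => h.
- destruct (Rlt_dec (f b) 0) as [h'|h'] => //; exfalso.
  have [z [Iz [z1 [z2 fz]]]] := IVT_I HI Hc Ia Ib hab h ltac:(lra).
  exact: (Hz z Iz z1 z2 fz).
- destruct (Rlt_dec (f a) 0) as [h'|h'] => //; exfalso.
  have Hc' : forall r, I r -> limit1_in (fun x => - f x) I (- f r) r.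
    by move=> r Ir; apply: limit_Ropp; apply: Hc.
  have [z [Iz [z1 [z2 fz]]]] := IVT_I HI Hc' Ia Ib hab ltac:(lra) ltac:(lra).
  apply: (Hz z Iz z1 z2); lra.
Qed.

Local Close Scope R_scope.
Section Main.
Variables (X : Type) (n : nat) (V : finType) (A : eqType)
    (attr : X -> {ffun 'I_n -> V} -> 'I_n -> A)
    (sigma : R -> seq A -> R)
    (rule : X -> {set 'I_n} -> {ffun 'I_n -> V} -> {ffun 'I_n -> V})
    (init : X -> {ffun 'I_n -> V})
    (locopt : X -> {ffun 'I_n -> V} -> bool)
    (k kappa beta : nat) (I : R -> Prop).
Hypotheses (HI : is_interval I) (Hsym : score_symmetric sigma)
  (Hcont : score_continuous I sigma) (Hcross : kappa_crossing I sigma k kappa)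
  (Hbeta : beta_bounded attr sigma rule init locopt k beta I).

Local Notation trj := (traj attr sigma rule init k).
Local Notation stp := (step attr sigma rule k).
Local Notation ontr := (on_traj attr sigma rule init locopt k).
Local Notation outp := (output attr sigma rule init locopt k).
Local Notation stopt := (stop_time attr sigma rule init locopt k).

Definition betaP x (K : {set 'I_n}) (L : seq (seq A)) : Prop :=
  (size L <= beta)%N /\ forall rho t, I rho -> ontr rho x t ->
   exists2 c, c \in L & perm_eq c [seq attr x (trj rho x t) i | i <- enum K].
Definition LB x K := epsilon (inhabits [::]) (betaP x K).
Lemma LB_spec x (K : {set 'I_n}) : (#|K| <= k)%N -> betaP x K (LB x K).
Proof. move=> hK; apply: epsilon_spec; exact: Hbeta. Qed.

Definition Kset := ksubs (enum 'I_n) k.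
Definition Lx x := flatten [seq LB x [set i in Kl] | Kl <- Kset].

Lemma Kset_prop Kl : Kl \in Kset -> [/\ uniq Kl, size Kl = k & #|[set i in Kl]| = k].
Proof.
move=> /ksubs_sub [hs hz].
have hu : uniq Kl by apply: subseq_uniq hs (enum_uniq _).
split => //; by rewrite cardsE; move/card_uniqP: hu => ->.
Qed.

Lemma size_Lx x : (size (Lx x) <= n ^ k * beta)%N.
Proof.
apply: leq_trans (size_flatten_count (p := predT) (b := beta) _ _) _.
- move=> Kl hKl _; have [_ _ hc] := Kset_prop hKl.
  by have [] := LB_spec x (K := [set i in Kl]) ltac:(by rewrite hc).
- by [].
- rewrite count_predT leq_mul2r; apply/orP; right.
  by have := size_ksubs (enum 'I_n) k; rewrite size_enum_ord.
Qed.

Lemma in_Lx x rho t Kl : I rho -> ontr rho x t -> Kl \in Kset ->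
  exists2 c, c \in Lx x & perm_eq c (map (attr x (trj rho x t)) Kl).
Proof.
move=> Ir Ht hKl; have [hu hs hc] := Kset_prop hKl.
have [_ H] := LB_spec x (K := [set i in Kl]) ltac:(by rewrite hc).
have [c hc1 hc2] := H rho t Ir Ht.
exists c; first by apply/flatten_mapP; exists Kl.
apply: perm_trans hc2 _; apply: perm_map.
by apply: uniq_perm (enum_uniq _) hu _ => i; rewrite mem_enum inE.
Qed.

Definition same_cmp rho rho' x := forall c c', c \in Lx x -> c' \in Lx x ->
  size c = k -> size c' = k ->
  (Rlt (sigma rho c) (sigma rho c') <-> Rlt (sigma rho' c) (sigma rho' c')).

Lemma step_eq rho rho' x t : I rho -> same_cmp rho rho' x -> ontr rho x t ->
  stp rho x (trj rho x t) = stp rho' x (trj rho x t).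
Proof.
move=> Ir Hs Ht; rewrite /step /chosen.
have HK := fun Kl => @in_Lx x rho t Kl Ir Ht.
rewrite -/Kset in HK *.
have HKs : forall Kl, Kl \in Kset -> size Kl = k by move=> Kl /Kset_prop [].
case E: Kset HK HKs => [|K0 Ks] // HK HKs.
suff -> : first_argmax (score attr sigma rho x (trj rho x t)) K0 Ks =
  first_argmax (score attr sigma rho' x (trj rho x t)) K0 Ks by [].
apply: (first_argmax_ext (P := fun K => K \in K0 :: Ks)).
- move=> a b ha hb.
  have [ca hca1 hca2] := HK a ha; have [cb hcb1 hcb2] := HK b hb.
  rewrite /score -(Hsym rho hca2) -(Hsym rho' hca2)
    -(Hsym rho hcb2) -(Hsym rho' hcb2).
  apply: Hs => //.
  + by rewrite (perm_size hca2) size_map HKs.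
  + by rewrite (perm_size hcb2) size_map HKs.
- exact: mem_head.
- by move=> y hy; rewrite inE hy orbT.
Qed.

Lemma traj_eq rho rho' x t : I rho -> same_cmp rho rho' x -> ontr rho x t ->
  trj rho x t = trj rho' x t.
Proof.
move=> Ir Hs; elim: t => [|t IH] Ht //.
have Ht' : ontr rho x t by move=> t' h; apply: Ht; apply: (ltn_trans h).
change (stp rho x (trj rho x t) = stp rho' x (trj rho' x t)).
by rewrite -(IH Ht') (step_eq Ir Hs Ht').
Qed.

Lemma find_prefix (p p' : pred nat) a m :
  (forall t, (t <= a + find p (iota a m))%N -> p t = p' t) ->
  find p' (iota a m) = find p (iota a m).
Proof.
elim: m a => [|m IH] a H //=.
case pa: (p a).
- by rewrite -(H a) ?pa // leq_addr.
- rewrite -(H a) ?pa ?leq_addr //; congr S; apply: IH => t ht; apply: H.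
  rewrite /= pa; lia.
Qed.

Lemma on_traj_stop rho x : ontr rho x (stopt rho x).
Proof.
move=> t' ht'.
have ht'' : (t' < (#|{: {ffun 'I_n -> V}}|).+1)%N.
  apply: (leq_trans ht'); rewrite /stop_time.
  by apply: leq_trans (find_size _ _) _; rewrite size_iota.
have := before_find 0 ht'; rewrite nth_iota // add0n => ->; done.
Qed.

Lemma output_eq rho rho' x : I rho -> same_cmp rho rho' x -> outp rho x = outp rho' x.
Proof.
move=> Ir Hs.
have Hst := @on_traj_stop rho x.
have Heq : forall t, (t <= stopt rho x)%N -> trj rho x t = trj rho' x t.
  move=> t ht; apply: traj_eq => // t' h; apply: Hst; exact: leq_trans h ht.
have Hs' : stopt rho' x = stopt rho x.
  rewrite /stop_time; apply: find_prefix => t ht /=.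
  by rewrite Heq // /stop_time -(add0n (find _ _)).
by rewrite /output Hs' Heq.
Qed.

Definition crossP (c c' : seq A) (L : seq R) := (size L <= kappa)%N /\
  forall rho, I rho -> sigma rho c = sigma rho c' -> List.In rho L.
Definition cr c c' := epsilon (inhabits [::]) (crossP c c').
Definition good (c c' : seq A) := [&& size c == k, size c' == k & ~~ perm_eq c c'].

Lemma cr_spec c c' : good c c' -> crossP c c' (cr c c').
Proof.
case/and3P => /eqP h1 /eqP h2 h3; apply: epsilon_spec.
by apply: Hcross => //; rewrite h1 ?h2.
Qed.

Definition BPx x := flatten [seq flatten [seq (if good c c' then cr c c' else [::])
  | c' <- Lx x] | c <- Lx x].

Lemma size_BPx x : (size (BPx x) <=
   size (Lx x) * ((if k == 0 then 0 else (size (Lx x)).-1) * kappa))%N.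
Proof.
apply: leq_trans (size_flatten_count (p := predT)
   (b := (if k == 0 then 0 else (size (Lx x)).-1) * kappa) _ _) _.
- move=> c hc _.
  apply: leq_trans (size_flatten_count (p := good c) (b := kappa) _ _) _.
  + by move=> c' _ hg; rewrite hg; have [] := cr_spec hg.
  + by move=> c' hg; rewrite (negbTE hg).
  + rewrite leq_mul2r; apply/orP; right.
    case: eqP => hk.
    * rewrite leqn0 -(count_pred0 (Lx x)); apply/eqP; apply: eq_count => c'.
      apply/negbTE; apply/and3P => -[/eqP h1 /eqP h2 h3].
      by move: h1 h2 h3; rewrite hk => /size0nil -> /size0nil ->.
    * apply: (count_lt_pred (x := c)) => //.
      by rewrite /good perm_refl !andbF.
- by [].
- by rewrite count_predT.
Qed.

Lemma in_BPx x c c' z : c \in Lx x -> c' \in Lx x -> good c c' ->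
  List.In z (cr c c') -> List.In z (BPx x).
Proof.
move=> hc hc' hg hz; apply: (In_flatten_map hc).
by apply: (In_flatten_map hc'); rewrite hg.
Qed.

Lemma cmp_stable x rho rho' : I rho -> I rho' -> Rle rho rho' ->
  (forall z, I z -> Rle rho z -> Rle z rho' -> ~ List.In z (BPx x)) ->
  same_cmp rho rho' x.
Proof.
move=> Ir Ir' hle Hn c c' hc hc' sc sc'.
case hp: (perm_eq c c').
- rewrite (Hsym rho hp) (Hsym rho' hp); split => h; lra.
- have hg : good c c' by rewrite /good sc sc' hp !eqxx.
  have [_ Hz] := cr_spec hg.
  have := @sign_const I (fun r => Rminus (sigma r c) (sigma r c')) rho rho' HI _ Ir Ir' hle _.
  case.
  + by move=> r Ir0; apply: limit_minus; apply: Hcont.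
  + move=> z Iz h1 h2 fz; apply: (Hn z Iz h1 h2); apply: (in_BPx hc hc' hg).
    apply: Hz => //; lra.
  + move=> H1 H2; split => h.
    * have := H1 ltac:(lra); lra.
    * have := H2 ltac:(lra); lra.
Qed.

End Main.


Lemma expn_pow' a b : expn a b = Nat.pow a b.
Proof. elim: b => [|b IH] //; by rewrite expnS IH. Qed.

Lemma ln_INR_ge0 q : Rle 0 (ln (INR q)).
Proof.
case: q => [|q].
- rewrite INR_0 /ln; case: Rlt_dec => h; [exfalso; exact: (Rlt_irrefl _ h) | exact: Rle_refl].
- have h1 : Rle 1 (INR q.+1) by rewrite S_INR; have := pos_INR q; lra.
  destruct (Req_dec (INR q.+1) 1) as [e|e]; first by rewrite e ln_1; lra.
  rewrite -ln_1; left; apply: ln_increasing; lra.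
Qed.

Lemma pow_bound m a : (2 ^ m <= 3 * m * 2 ^ a)%N -> (m <= 2 * a + 9)%N.
Proof.
move=> h; rewrite leqNgt; apply/negP => hm.
pose d := (m - (2 * a + 10))%N.
have em : m = (a + (a + 10 + d))%N by rewrite /d; lia.
move: h; rewrite em expnD mulnC leq_pmul2r ?expn_gt0 // => h.
have h2 : (a + d < 2 ^ (a + d))%N by apply: ltn_expl.
have h3 : (2 ^ (a + 10 + d) = 1024 * 2 ^ (a + d))%N.
  by rewrite -addnA [(10 + d)%N]addnC addnA expnD -mulnC.
lia.
Qed.

Lemma real_step a b c d : Rle 0 (a*d) -> Rle (a*b) (a*(2*d)) -> Rle c (17*a*b) -> Rle c (40*a*d).
Proof. intros. lra. Qed.

Lemma final_arith m k kappa beta n :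
  (k <= n)%N ->
  (2 ^ m <= 2 * (m * (n ^ k * beta * ((if k == 0 then 0 else (n ^ k * beta).-1) * kappa))) + 1)%N ->
  Rle (INR m) (Rmult (Rmult 40 (INR k)) (ln (INR (kappa * beta * n)))).
Proof.
move=> hkn h.
have hQ := ln_INR_ge0 (kappa * beta * n).
have hk0 := pos_INR k.
case: m h => [|m] h.
  by rewrite /=; apply: Rmult_le_pos => //; apply: Rmult_le_pos => //; lra.
set N := (n ^ k * beta)%N in h.
case: eqP h => [hk|hk] h.
  by exfalso; move: h; rewrite mul0n !muln0 expnS; have := expn_gt0 2 m; lia.
set M := m.+1 in h *.
set P := (M * (N * (N.-1 * kappa)))%N in h.
have hP : (1 <= P)%N.
  rewrite lt0n; apply/negP => /eqP P0; move: h; rewrite P0 expnS; lia.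
have hkap : (1 <= kappa)%N.
  by rewrite lt0n; apply/negP => /eqP k0; move: hP; rewrite /P k0 !muln0.
have hN : (2 <= N)%N.
  case: (leqP 2 N) => // hN1; exfalso; move: hP; rewrite /P; nia.
have hb : (1 <= beta)%N.
  by rewrite lt0n; apply/negP => /eqP b0; move: hN; rewrite /N b0 muln0.
have hn : (1 <= n)%N.
  rewrite lt0n; apply/negP => /eqP n0; move: hN; rewrite /N n0 exp0n ?mul0n //.
  by rewrite lt0n; apply/eqP.
set Q := (kappa * beta * n)%N in hQ *.
have hQ2 : (2 <= Q)%N.
  case: (ltngtP n 1) => hn1; first lia.
  - rewrite /Q; have : (1 * 1 * 2 <= kappa * beta * n)%N by rewrite !leq_mul. done.
  - move: hN; rewrite /N hn1 exp1n mul1n => hb2.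
    by rewrite /Q; have : (1 * 2 * 1 <= kappa * beta * n)%N by rewrite !leq_mul. 
have h1 : (2 ^ M <= 3 * M * (N * N * kappa))%N.
  have hY : (P <= M * (N * N * kappa))%N.
    rewrite /P leq_mul2l -mulnA leq_mul2l; apply/orP; right; apply/orP; right.
    by rewrite leq_mul2r leq_pred orbT.
  move: hY; set Y := (M * (N * N * kappa))%N; rewrite -mulnA -/Y; lia.
have hkpos : (0 < k)%N by rewrite lt0n; apply/eqP.
have h2 : (N * N * kappa <= Q ^ (2 * k))%N.
  rewrite /N /Q !expnMn.
  have e1 : (kappa <= kappa ^ (2 * k))%N.
    by rewrite -{1}(expn1 kappa) leq_pexp2l //; lia.
  have e2 : (beta * beta <= beta ^ (2 * k))%N.
    by rewrite mulnn leq_pexp2l //; lia.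
  have e3 : (n ^ k * n ^ k = n ^ (2 * k))%N by rewrite -expnD; congr expn; lia.
  rewrite mulnACA; rewrite e3 [X in (_ <= X)%N]mulnC -mulnA; apply: leq_mul => //.
  rewrite mulnC; exact: leq_mul.
set q := trunc_log 2 Q.
have [hq1 hq2] : (2 ^ q <= Q)%N /\ (Q < 2 ^ q.+1)%N.
  by have := trunc_log_bounds (p := 2) (n := Q) erefl ltac:(lia); case/andP.
have hq : (1 <= q)%N by apply: trunc_log_max => //; rewrite expn1.
have s1 : (Q ^ (2 * k) <= (2 ^ q.+1) ^ (2 * k))%N.
  rewrite leq_exp2r; first exact: ltnW hq2.
  by rewrite muln_gt0 hkpos.
have s2 : ((2 ^ q.+1) ^ (2 * k) <= 2 ^ (4 * k * q))%N.
  have e : (4 * k * q = (2 * k) * (2 * q))%N by rewrite mulnACA -mulnA.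
  rewrite -expnM leq_exp2l // (mulnC q.+1) e leq_mul2l; apply/orP; right.
  by rewrite mul2n -addnn -addn1 leq_add2l.
have h3 := leq_trans s1 s2.
have h4 : (M <= 2 * (4 * k * q) + 9)%N.
  apply: pow_bound; apply: (leq_trans h1); rewrite leq_mul2l; apply/orP; right.
  exact: leq_trans h2 h3.
have h5 : (M <= 17 * k * q)%N.
  have kq : (1 <= k * q)%N by rewrite muln_gt0 hkpos.
  move: h4 kq; rewrite -!mulnA; move: (k * q)%N => t; lia.
have R5 : Rle (INR M) (17 * INR k * INR q).
  have := le_INR _ _ (ssrnat.leP h5); rewrite !mult_INR /=; lra.
have Rq : Rle (INR q * ln 2) (ln (INR Q)).
  have i2 : INR 2 = IZR 2 by rewrite S_INR INR_1; lra.
  have e : INR (2 ^ q) = pow (IZR 2) q by rewrite expn_pow' pow_INR i2.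
  rewrite -ln_pow; last lra.
  rewrite -e.
  have hle := le_INR _ _ (ssrnat.leP hq1).
  have hpos : Rlt 0 (INR (2 ^ q)) by apply: lt_0_INR; apply/ssrnat.ltP; rewrite expn_gt0.
  destruct (Req_dec (INR (2 ^ q)) (INR Q)) as [E|E]; first by rewrite E; lra.
  left; apply: ln_increasing; lra.
have l2 := ln_lt_2.
have qpos := pos_INR q.
have Rq1 : Rle (INR q * / 2) (INR q * ln 2) by apply: Rmult_le_compat_l; lra.
have Rq2 : Rle (INR q) (2 * ln (INR Q)) by lra.
have Rk : Rle (INR k * INR q) (INR k * (2 * ln (INR Q))) by apply: Rmult_le_compat_l.
have : Rle 0 (INR k * ln (INR Q)) by apply: Rmult_le_pos.
move=> H0; exact: (real_step H0 Rk R5).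
Qed.


Lemma hasIn (T : Type) (p : pred T) s : has p s -> exists x, List.In x s /\ p x.
Proof.
elim: s => [|y s IH] //= /orP[h|h]; first by exists y; split => //; left.
by have [x [h1 h2]] := IH h; exists x; split => //; right.
Qed.

Lemma Inhas (T : Type) (p : pred T) s x : List.In x s -> p x -> has p s.
Proof. elim: s => [|y s IH] //= [<-|h] px; first by rewrite px. by rewrite IH ?orbT. Qed.

Theorem mainTheorem3 :
  exists C : R,
  forall (X : Type) (n : nat) (V : finType) (A : eqType)
    (attr : X -> {ffun 'I_n -> V} -> 'I_n -> A)
    (sigma : R -> seq A -> R)
    (rule : X -> {set 'I_n} -> {ffun 'I_n -> V} -> {ffun 'I_n -> V})
    (init : X -> {ffun 'I_n -> V})
    (locopt : X -> {ffun 'I_n -> V} -> bool)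
    (feasible : X -> {ffun 'I_n -> V} -> bool)
    (cost : X -> {ffun 'I_n -> V} -> R)
    (k kappa beta : nat) (I : R -> Prop),
    is_interval I ->
    (k <= n)%N ->
    (* feasibility: initial solution feasible, assignment rule maintains it *)
    (forall x, feasible x (init x)) ->
    (forall x (K : {set 'I_n}) s, feasible x s -> #|K| = k -> feasible x (rule x K s)) ->
    (* the assignment rule only reassigns objects of K *)
    (forall x (K : {set 'I_n}) s i, i \notin K -> rule x K s i = s i) ->
    (* the procedure terminates *)
    (forall rho x, I rho -> exists t, locopt x (traj attr sigma rule init k rho x t)) ->
    (* (kappa, beta)-single-parameter family *)
    score_symmetric sigma ->
    score_continuous I sigma ->
    kappa_crossing I sigma k kappa ->
    beta_bounded attr sigma rule init locopt k beta I ->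
    forall (m : nat) (xs : 'I_m -> X),
      shatters I (fun rho x => cost x (output attr sigma rule init locopt k rho x)) xs ->
      Rle (INR m) (Rmult (Rmult C (INR k)) (ln (INR (kappa * beta * n)))).
Proof.
exists (IZR 40).
move=> X n V A attr sigma rule init locopt feasible cost k kappa beta I
  HI hkn _ _ _ _ Hsym Hcont Hcross Hbeta m xs [_ [r Hr]].
apply: final_arith => //.
set out := output attr sigma rule init locopt k.
set BP := flatten [seq BPx attr sigma rule init locopt k kappa beta I (xs i) | i <- enum 'I_m].
set Lm := (n ^ k * beta)%N.
have hBP : (size BP <= m * (Lm * ((if k == 0 then 0 else Lm.-1) * kappa)))%N.
  rewrite /BP.
  apply: (leq_trans (size_flatten_count (p := predT)
    (b := (Lm * ((if k == 0 then 0 else Lm.-1) * kappa))%N) _ _)).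
  - move=> i _ _.
    apply: leq_trans (size_BPx attr rule init locopt beta Hcross (xs i)) _.
    have hL := size_Lx Hbeta (xs i).
    apply: leq_mul => //; apply: leq_mul => //.
    by case: (k == 0) => //; rewrite -!subn1 leq_sub2r.
  - by [].
  - by rewrite count_predT size_enum_ord.
set cnt := fun rho => count (fun b => if Rlt_dec b rho then true else false) BP.
set isb := fun rho => has (fun b => if Req_EM_T b rho then true else false) BP.
have Hstrict : forall rho rho' b, List.In b BP -> Rle rho b -> Rlt b rho' ->
    (cnt rho < cnt rho')%N.
  move=> rho rho' b hb h1 h2; rewrite /cnt.
  apply: (count_lt_strict (x := b)) => //.
  - move=> y; case: Rlt_dec => // hy _; case: Rlt_dec => // hy'; exfalso; lra.
  - by case: Rlt_dec.
  - by case: Rlt_dec => // hy; exfalso; lra.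
have Hsame : forall rho rho', I rho -> I rho' -> cnt rho = cnt rho' ->
    isb rho = isb rho' -> forall i, out rho (xs i) = out rho' (xs i).
  suff H : forall rho rho', I rho -> I rho' -> Rle rho rho' -> cnt rho = cnt rho' ->
      isb rho = isb rho' -> forall i, out rho (xs i) = out rho' (xs i).
    move=> rho rho' Ir Ir' hc hi i.
    destruct (Rle_or_lt rho rho') as [hl|hl]; first exact: H.
    symmetry; apply: H => //; lra.
  move=> rho rho' Ir Ir' hle hc hi i.
  destruct (Req_dec rho rho') as [e|hne]; first by rewrite e.
  apply: (output_eq Hsym Hbeta Ir).
  apply: (cmp_stable HI Hsym Hcont Hcross Ir Ir' hle) => z Iz h1 h2 hz.
  have hzB : List.In z BP by apply: (In_flatten_map (a := i)) => //; rewrite mem_enum.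
  destruct (Rlt_dec z rho') as [hlt|hge].
  - by have := Hstrict _ _ _ hzB h1 hlt; rewrite hc ltnn.
  - have ez : z = rho' by lra.
    have : isb rho' by apply: (Inhas (x := z)) => //; case: Req_EM_T.
    rewrite -hi => /hasIn [b [hb pb]].
    move: pb; case: Req_EM_T => // eb _.
    have := Hstrict rho rho' b hb ltac:(lra) ltac:(lra); rewrite hc ltnn //.
set B := size BP.
set code := fun rho => (2 * cnt rho + isb rho)%N.
have hcode : forall rho, (code rho < (2 * B).+1)%N.
  move=> rho; rewrite /code.
  have h1 : (cnt rho <= B)%N by apply: count_size.
  case hb: (isb rho); last by lia.
  have [b [hbB pb]] := hasIn hb.
  have : (cnt rho < count predT BP)%N.
    apply: (count_lt_strict (x := b)) => //.
    move: pb; case: Req_EM_T => // eb _.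
    by case: Rlt_dec => // h; exfalso; rewrite eb in h; lra.
  rewrite count_predT /B; lia.
pose rhoT := fun T : {set 'I_m} => epsilon (inhabits R0) (fun rho : R => I rho /\
  forall i, Rlt (r i) (cost (xs i) (out rho (xs i))) <-> i \in T).
have HrT : forall T, I (rhoT T) /\
    forall i, Rlt (r i) (cost (xs i) (out (rhoT T) (xs i))) <-> i \in T.
  by move=> T; exact: (epsilon_spec _ _ (Hr T)).
pose F := fun T : {set 'I_m} => (inord (code (rhoT T)) : 'I_(2 * B).+1).
have Finj : injective F.
  move=> T T' /(congr1 (@nat_of_ord _)); rewrite /F !inordK ?hcode // /code => e.
  have [ec ei] : cnt (rhoT T) = cnt (rhoT T') /\ isb (rhoT T) = isb (rhoT T').
    by move: e; case: (isb (rhoT T)); case: (isb (rhoT T')) => /= e; split; lia.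
  have [IT HT] := HrT T; have [IT' HT'] := HrT T'.
  have Ho := Hsame _ _ IT IT' ec ei.
  apply/setP => i; apply/idP/idP => h.
  - by apply/HT'; rewrite -Ho; apply/HT.
  - by apply/HT; rewrite Ho; apply/HT'.
have := @leq_card _ _ F Finj; rewrite card_setT card_ord => h2m.
apply: (leq_trans h2m); rewrite -addn1 leq_add2r leq_mul2l; apply/orP; right.
exact: hBP.
Qed.
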